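(* Let $A\in\mathbb{R}^{n\times n}$ and $B\in\mathbb{R}^{n\times m}$ with $\rho(|A|)<1$, and let $T$ be a positive integer. Let $i,j\in\{1,\dots,n\}$, $i\neq j$, and $w\in\mathbb{R}$ be such that $\rho(|A|+|w|e_je_i^{\top})<1$. Then $$\operatorname{tr}(\mathcal{W}_A)\le\operatorname{tr}(\mathcal{W}^{\infty}_A)\le\operatorname{tr}(\mathcal{H}_{\mathcal{X}})$$ and $$\operatorname{tr}(\mathcal{W}_{A+we_je_i^{\top}})\le(1+\alpha\beta)\operatorname{tr}(\mathcal{H}_{\mathcal{X}})+\alpha^2\gamma\bar{\gamma}.$$
   Context: $|\cdot|$ is taken entrywise; $\rho$ is the spectral radius; $e_k$ is the $k$-th canonical unit vector; $\|\cdot\|$ is the Euclidean norm. For $Z\in\mathbb{R}^{n\times n}$, $\mathcal{W}_Z=\sum_{t=0}^{T-1}Z^tBB^{\top}(Z^t)^{\top}$ and $\mathcal{W}^\infty_Z=\sum_{t=0}^{\infty}Z^tBB^{\top}(Z^t)^{\top}$. Define $\mathcal{X}=(I-|A|)^{-1}$, $\mathcal{H}_{\mathcal{X}}=\mathcal{X}|B||B|^{\top}\mathcal{X}^{\top}$, $\alpha_{pq}=\frac{|w|}{1-|w|e_p^{\top}\mathcal{X}e_q}$, $\alpha=\max_{p\neq q}\alpha_{pq}$, $\beta=\max\{\max_{p\neq q}2e_p^{\top}\mathcal{X}e_q,\ \max_{p\neq q}e_p^{\top}\mathcal{X}e_q+\max_{q}\|\mathcal{X}e_q\|\}$, $\gamma=\max_k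 e_k^{\top}\mathcal{X}^{\top}\mathcal{X}e_k$, $\bar\gamma=\max_k e_k^{\top}\mathcal{X}|B||B|^{\top}\mathcal{X}^{\top}e_k$. *)

(* Defs.v *)
From HB Require Import structures.
From mathcomp Require Import all_boot all_order all_algebra.
From mathcomp Require Import complex.
From mathcomp Require Import all_classical all_reals all_analysis.
Set Implicit Arguments. Unset Strict Implicit. Unset Printing Implicit Defensive.
Import Order.TTheory GRing.Theory Num.Theory.
Local Open Scope ring_scope.

Section Defs.
Variable R : realType.

Definition absmx (p q : nat) (M : 'M[R]_(p, q)) : 'M[R]_(p, q) :=
  map_mx (fun x => `|x|) M.

Definition eigvals (n : nat) (M : 'M[R]_n) : seq R[i] :=
  projT1 (closed_field_poly_normal (char_poly (map_mx (real_complex R) M))).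

(* spectral radius: largest modulus of an eigenvalue (0 for the empty matrix) *)
Definition specrad (n : nat) (M : 'M[R]_n) : R :=
  \big[Num.max/0]_(z <- eigvals M) @complex.Re R `|z|.

Definition gram (n m T : nat) (Z : 'M[R]_n) (B : 'M[R]_(n, m)) : 'M[R]_n :=
  \sum_(t < T) (Z ^+ t *m B *m B^T *m (Z ^+ t)^T).

Definition gram_inf (n m : nat) (Z : 'M[R]_n) (B : 'M[R]_(n, m)) : 'M[R]_n :=
  \matrix_(p, q)
    limn (fun N => \sum_(0 <= t < N) (Z ^+ t *m B *m B^T *m (Z ^+ t)^T) p q).

(* max of F p q over p <> q, seeded with the member F i j (i <> j) *)
Definition max_offdiag (n : nat) (i j : 'I_n) (F : 'I_n -> 'I_n -> R) : R :=
  \big[Num.max/F i j]_(p < n) \big[Num.max/F i j]_(q < n | p != q) F p q.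

(* max of F k over all k, seeded with the member F i *)
Definition max_all (n : nat) (i : 'I_n) (F : 'I_n -> R) : R :=
  \big[Num.max/F i]_(k < n) F k.

End Defs.

(* Main.v *)
Require Import Defs.
From HB Require Import structures.
From mathcomp Require Import all_boot all_order all_algebra.
From mathcomp Require Import complex.
From mathcomp Require Import all_classical all_reals all_analysis.
From mathcomp Require Import perm.
From mathcomp Require Import ring lra.
Import Order.TTheory GRing.Theory Num.Theory.
Local Open Scope ring_scope.

Module Helpers.
Set Implicit Arguments. Unset Strict Implicit. Unset Printing Implicit Defensive.
Local Open Scope complex_scope.
Local Open Scope ring_scope.

Lemma specrad_ge (R : realType) n (N : 'M[R]_n) z :
  z \in eigvals N -> complex.Re `|z| <= specrad N.
Proof.
rewrite /specrad; elim: (eigvals N) => [|y r IH] //.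
rewrite in_cons big_cons le_max => /orP[/eqP->|/IH ->]; last by rewrite orbT.
by rewrite lexx.
Qed.

Lemma specrad_ge0 (R : realType) n (N : 'M[R]_n) : 0 <= specrad N.
Proof.
rewrite /specrad; elim: (eigvals N) => [|z r IH]; first by rewrite big_nil.
by rewrite big_cons le_max IH orbT.
Qed.

Lemma char_poly_horner (F : comNzRingType) n (M : 'M[F]_n) x :
  (char_poly M).[x] = \det (x%:M - M).
Proof.
rewrite /char_poly -horner_evalE -det_map_mx; congr (\det _).
apply/matrixP => a b; rewrite !mxE /= horner_evalE hornerD hornerN hornerC.
by rewrite hornerMn hornerX.
Qed.

Lemma det_eig (R : realType) n (N : 'M[R]_n) (s : R) : s != 0 ->
  (\det (1%:M - s *: N))%:C = \prod_(z <- eigvals N) (1 - s%:C * z).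
Proof.
move=> s0.
rewrite -[LHS]det_map_mx.
have -> : map_mx (real_complex R) (1%:M - s *: N) =
   s%:C *: ((s%:C)^-1%:M - map_mx (real_complex R) N).
  apply/matrixP => a b; rewrite !mxE /= mulrBr mulrnAr.
  have sC0 : s%:C != 0 by rewrite (inj_eq (@complexI R)).
  by rewrite mulfV // rmorphB rmorphM /= rmorphMn.
rewrite detZ -char_poly_horner.
rewrite /eigvals; case: closed_field_poly_normal => r /= Hr.
have := char_poly_monic (map_mx (real_complex R) N); rewrite qualifE /= => /eqP L1.
have Hsz : size r = n.
  have := size_char_poly (map_mx (real_complex R) N).
  by rewrite Hr L1 scale1r size_prod_XsubC => -[].
rewrite Hr L1 scale1r horner_prod -Hsz.
elim: r {Hr Hsz} => [|z r IH]; first by rewrite !big_nil expr0 mulr1.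
rewrite !big_cons exprS -mulrA.
rewrite (mulrCA (_ ^+ _)) IH mulrA hornerXsubC mulrBr mulfV //.
by rewrite (inj_eq (@complexI R)).
Qed.

Lemma normC_real (R : realType) (d : R) : `|d%:C| = `|d|%:C.
Proof. by rewrite normc_def /= expr0n /= addr0 sqrtr_sqr. Qed.

Lemma normC_Re (R : realType) (z : R[i]) : `|z| = (complex.Re `|z|)%:C.
Proof. by rewrite {1}normc_def normc_def. Qed.

Lemma normC_Re_ge0 (R : realType) (z : R[i]) : 0 <= complex.Re `|z|.
Proof. by rewrite normc_def /= sqrtr_ge0. Qed.

Lemma det_lb (R : realType) n (N : 'M[R]_n) (s : R) :
  specrad N < 1 -> 0 <= s <= 1 ->
  (1 - specrad N) ^+ (size (eigvals N)) <= `|\det (1%:M - s *: N)|.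
Proof.
move=> Hr /andP[s0 s1].
have r0 := specrad_ge0 N.
have [->|sn0] := eqVneq s 0.
  rewrite scale0r subr0 det1 normr1; apply: exprn_ile1; first by rewrite subr_ge0 ltW.
  by rewrite lerBlDr lerDl.
rewrite -lecR -normC_real det_eig // normr_prod.
have : forall z, z \in eigvals N -> complex.Re `|z| <= specrad N.
  by move=> z; apply: specrad_ge.
elim: (eigvals N) => [|z r IH] Hz; first by rewrite big_nil expr0.
rewrite big_cons /= exprS rmorphM /=; apply: ler_pM.
- by rewrite lecR subr_ge0 ltW.
- by rewrite lecR exprn_ge0 // subr_ge0 ltW.
- have t0 := normC_Re_ge0 z.
  have tr : complex.Re `|z| <= specrad N by apply: Hz; rewrite in_cons eqxx.
  apply: le_trans (lerB_dist _ _).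
  rewrite normr1 normrM (normC_Re z) normC_real (ger0_norm s0) -rmorphM -rmorphB lecR.
  rewrite lerD2l lerN2; apply: le_trans tr; rewrite -[X in _ <= X]mul1r.
  exact: ler_wpM2r.
- by apply: IH => y yr; apply: Hz; rewrite in_cons yr orbT.
Qed.

Lemma le_sum1 (R : realType) (I : finType) (F : I -> R) a :
  (forall i, 0 <= F i) -> F a <= \sum_i F i.
Proof.
by move=> H; rewrite (bigD1 a) //= lerDl sumr_ge0.
Qed.

Lemma cof_bound (R : realType) n (M : 'M[R]_n) (Bd : R) :
  1 <= Bd -> (forall a c, `|M a c| <= Bd) ->
  forall a c, `|cofactor M a c| <= #|{perm 'I_n}|%:R * Bd ^+ n.
Proof.
move=> B1 HM a c; rewrite expand_cofactor.
apply: le_trans (ler_norm_sum _ _ _) _.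
rewrite mulr_natl -sumr_const big_mkcond /=.
apply: ler_sum => s _; case: ifP => _; last by rewrite exprn_ge0 // (le_trans ler01 B1).
rewrite normrM normrX normrN1 expr1n mul1r normr_prod.
apply: le_trans (_ : \prod_(k | a != k) Bd <= _).
  by apply: ler_prod => k _; rewrite normr_ge0 HM.
rewrite prodr_const; apply: ler_weXn2l => //.
by apply: leq_trans (max_card _) _; rewrite card_ord.
Qed.

Definition Kb (R : realType) n (N : 'M[R]_n) : R :=
  #|{perm 'I_n}|%:R * (1 + \sum_a \sum_c `|N a c|) ^+ n
    / (1 - specrad N) ^+ size (eigvals N).

Lemma inv_bound (R : realType) n (N : 'M[R]_n) (s : R) :
  specrad N < 1 -> 0 <= s <= 1 ->
  (1%:M - s *: N) \in unitmx /\
  forall a c, `|invmx (1%:M - s *: N) a c| <= Kb N.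
Proof.
move=> Hr Hs; have Hd := det_lb Hr Hs.
have c0 : 0 < (1 - specrad N) ^+ size (eigvals N).
  by rewrite exprn_gt0 // subr_gt0.
have d0 : 0 < `|\det (1%:M - s *: N)| := lt_le_trans c0 Hd.
have Hu : (1%:M - s *: N) \in unitmx.
  by rewrite unitmxE unitfE -normr_gt0.
split => // a c.
rewrite /invmx Hu !mxE normrM normfV mulrC.
case/andP: Hs => s0 s1.
have Hc := @cof_bound R n (1%:M - s *: N) (1 + \sum_a \sum_c `|N a c|).
have Hc' : `|cofactor (1%:M - s *: N) c a| <=
    #|{perm 'I_n}|%:R * (1 + \sum_a \sum_c `|N a c|) ^+ n.
  apply: Hc; first by rewrite lerDl sumr_ge0 // => ? _; rewrite sumr_ge0.
  move=> p q; rewrite !mxE. apply: (le_trans (ler_normB _ _)).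
  apply: lerD; first by case: (p == q); rewrite ?normr1 ?normr0.
  rewrite normrM (ger0_norm s0); apply: le_trans (_ : `|N p q| <= _).
    by rewrite -[X in _ <= X]mul1r ler_wpM2r.
  apply: le_trans (@le_sum1 _ _ (fun q => `|N p q|) q _) _ => //.
  apply: (@le_sum1 _ _ (fun p => \sum_c `|N p c|) p) => ?.
  by apply: sumr_ge0.
rewrite /Kb; apply: le_trans (ler_wpM2r _ Hc') _; first by rewrite invr_ge0 ltW.
rewrite ler_wpM2l //; first by rewrite mulr_ge0 // exprn_ge0 // (le_trans ler01) // lerDl sumr_ge0 // => ? _; rewrite sumr_ge0.
by rewrite lef_pV2.
Qed.

Lemma min_principle (R : realType) n (Z Y0 P : 'M[R]_n) :
  (forall a c, 0 <= Y0 a c) -> (forall a c, 0 <= P a c) ->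
  (forall r, \sum_k P r k < 1) -> Z = Y0 + P *m Z -> forall a c, 0 <= Z a c.
Proof.
move=> HY HP Hs HZ a c.
case: (@arg_minP _ R _ a xpredT (fun r => Z r c) isT) => r0 _ Hmin.
rewrite leNgt; apply/negP => Hneg.
have Hm : Z r0 c < 0 := le_lt_trans (Hmin a isT) Hneg.
have E : Z r0 c = Y0 r0 c + \sum_k P r0 k * Z k c by rewrite {1}HZ !mxE.
have E2 : (\sum_k P r0 k) * Z r0 c <= \sum_k P r0 k * Z k c.
  by rewrite mulr_suml; apply: ler_sum => k _; apply: ler_wpM2l => //; apply: Hmin.
have key : forall z S T y : R, z = y + T -> S * z <= T -> z < 0 -> S < 1 ->
  0 <= y -> False by move=> z S T y; nra.
exact: (key _ _ _ _ E E2 Hm (Hs r0) (HY r0 c)).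
Qed.

Lemma Kb_ge0 (R : realType) n (N : 'M[R]_n) : specrad N < 1 -> 0 <= Kb N.
Proof.
move=> Hr; rewrite /Kb; apply: divr_ge0; last by rewrite exprn_ge0 // subr_ge0 ltW.
rewrite mulr_ge0 // exprn_ge0 // (le_trans ler01) // lerDl sumr_ge0 // => ? _.
by rewrite sumr_ge0.
Qed.

Lemma inv_nonneg (R : realType) n (N : 'M[R]_n) :
  (forall a c, 0 <= N a c) -> specrad N < 1 ->
  (1%:M - N) \in unitmx /\ forall a c, 0 <= invmx (1%:M - N) a c.
Proof.
move=> HN Hr.
have K0 : 0 <= Kb N := Kb_ge0 Hr.
have b0 : 0 <= \sum_a \sum_c `|N a c| by rewrite sumr_ge0 // => ? _; rewrite sumr_ge0.
have [L [L0 HL]] : exists L : nat, 0 < L%:R :> R /\ Kb N * \sum_a \sum_c `|N a c| < L%:R.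
  exists (Num.Def.archi_bound (Kb N * \sum_a \sum_c `|N a c|)).+1; split; first by rewrite ltr0n.
  apply: lt_le_trans (archi_boundP (mulr_ge0 K0 b0)) _.
  by rewrite ler_nat.
have d0 : 0 < L%:R^-1 :> R by rewrite invr_gt0.
have sk : forall k, (k <= L)%N -> 0 <= k%:R * (L%:R : R)^-1 <= 1.
  move=> k kL; apply/andP; split; first by rewrite mulr_ge0 ?ler0n ?ltW.
  by rewrite ler_pdivrMr // mul1r ler_nat.
have main : forall k, (k <= L)%N -> forall a c,
    0 <= invmx (1%:M - (k%:R * L%:R^-1) *: N) a c.
  elim=> [|k IH] kL.
    by move=> a c; rewrite mul0r scale0r subr0 invmx1 mxE ler0n.
  have kL' : (k <= L)%N by apply: ltnW.
  have [U0 B0] := inv_bound Hr (sk k kL').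
  have [U1 B1] := inv_bound Hr (sk k.+1 kL).
  have e1 : invmx (1%:M - (k%:R * L%:R^-1) *: N) *m (1%:M - (k%:R * L%:R^-1) *: N) = 1%:M.
    by apply: mulVmx.
  have e2 : (1%:M - (k.+1%:R * L%:R^-1) *: N) *m
     invmx (1%:M - (k.+1%:R * L%:R^-1) *: N) = 1%:M by apply: mulmxV.
  move: (IH kL') B0 B1 e1 e2.
  move: (invmx (1%:M - (k%:R * L%:R^-1) *: N)) => Y0 IH' B0.
  move: (invmx (1%:M - (k.+1%:R * L%:R^-1) *: N)) => Y1 B1 e1 e2.
  have E : Y1 = Y0 + (L%:R^-1 *: (Y0 *m N)) *m Y1.
    have e3 : 1%:M - (k%:R * L%:R^-1) *: N =
        (1%:M - (k.+1%:R * L%:R^-1) *: N) + L%:R^-1 *: N.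
      by apply/matrixP => p q; rewrite !mxE -addn1 natrD; ring.
    rewrite -{1}(mul1mx Y1) -e1 e3 mulmxDr mulmxDl -mulmxA e2 mulmx1.
    by rewrite scalemxAr.
  apply: (min_principle (P := L%:R^-1 *: (Y0 *m N)) _ _ _ E) => //.
  - move=> a c; rewrite mxE; apply: mulr_ge0; first exact: ltW.
    by rewrite mxE; apply: sumr_ge0 => l _; apply: mulr_ge0.
  - move=> r.
    have : \sum_k0 (L%:R^-1 *: (Y0 *m N)) r k0 <=
           L%:R^-1 * (Kb N * \sum_a \sum_c `|N a c|).
      under eq_bigr do rewrite !mxE.
      rewrite -mulr_sumr; apply: ler_wpM2l; first exact: ltW.
      rewrite exchange_big mulr_sumr /=.
      apply: ler_sum => l _; rewrite mulr_sumr; apply: ler_sum => k0 _.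
      rewrite (le_trans (ler_norm _)) // normrM; apply: ler_wpM2r => //.
    move/le_lt_trans; apply.
    by rewrite mulrC ltr_pdivrMr // mul1r.
have [U _] := inv_bound Hr (sk L (leqnn L)).
have := main L (leqnn L).
by rewrite divff ?gt_eqF // scale1r; rewrite divff ?gt_eqF // scale1r in U.
Qed.

Lemma mul_nonneg (R : realType) n m p (P : 'M[R]_(n, m)) (Q : 'M[R]_(m, p)) :
  (forall a c, 0 <= P a c) -> (forall a c, 0 <= Q a c) ->
  forall a c, 0 <= (P *m Q) a c.
Proof. by move=> HP HQ a c; rewrite mxE sumr_ge0 // => k _; rewrite mulr_ge0. Qed.

Lemma pow_nonneg (R : realType) n (N : 'M[R]_n) :
  (forall a c, 0 <= N a c) -> forall t a c, 0 <= (N ^+ t) a c.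
Proof.
move=> HN; elim=> [|t IH] a c; first by rewrite expr0 -idmxE mxE ler0n.
by rewrite exprSr -mulmxE; apply: mul_nonneg.
Qed.

Lemma psum_le (R : realType) n (N Z : 'M[R]_n) :
  (forall a c, 0 <= N a c) -> (forall a c, 0 <= Z a c) -> (1%:M - N) *m Z = 1%:M ->
  forall T a c, 0 <= (\sum_(t < T) N ^+ t) a c <= Z a c.
Proof.
move=> HN HZ E T a c; apply/andP; split.
  by rewrite summxE sumr_ge0 // => t _; apply: pow_nonneg.
have S1 : (\sum_(t < T) N ^+ t) *m (1%:M - N) = 1%:M - N ^+ T.
  elim: T => [|T IH]; first by rewrite big_ord0 mul0mx expr0 idmxE subrr.
  rewrite big_ord_recr /= mulmxDl IH mulmxBr mulmx1 exprSr mulmxE.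
  by rewrite addrA subrK.
have -> : \sum_(t < T) N ^+ t = Z - N ^+ T *m Z.
  by rewrite -[LHS]mulmx1 -E mulmxA S1 mulmxBl mul1mx.
have := mul_nonneg (pow_nonneg HN T) HZ a c.
by rewrite !mxE lerBlDr lerDl.
Qed.

Lemma abs_pow (R : realType) n (A M : 'M[R]_n) :
  (forall a c, `|A a c| <= M a c) ->
  forall t a c, `|(A ^+ t) a c| <= (M ^+ t) a c.
Proof.
move=> H; elim=> [|t IH] a c; first by rewrite expr0 -idmxE !mxE; case: (a == c); rewrite ?normr1 ?normr0.
rewrite !exprSr -!mulmxE !mxE; apply: le_trans (ler_norm_sum _ _ _) _.
apply: ler_sum => k _; rewrite normrM; apply: ler_pM => //.
Qed.

Lemma abs_mul (R : realType) n m p (P M : 'M[R]_(n, m)) (Q : 'M[R]_(m, p)) :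
  (forall a c, `|P a c| <= M a c) ->
  forall a c, `|(P *m Q) a c| <= (M *m absmx Q) a c.
Proof.
move=> H a c; rewrite !mxE; apply: le_trans (ler_norm_sum _ _ _) _.
by apply: ler_sum => k _; rewrite normrM mxE; apply: ler_pM.
Qed.

Lemma diag_sq (R : realType) n m (C : 'M[R]_n) (B : 'M[R]_(n, m)) p :
  (C *m B *m B^T *m C^T) p p = \sum_r (C *m B) p r ^+ 2.
Proof.
rewrite -mulmxA -trmx_mul mxE; apply: eq_bigr => r _; by rewrite [(_^T) _ _]mxE expr2.
Qed.

Lemma sum_sq_le (R : realType) T (x : 'I_T -> R) :
  (forall t, 0 <= x t) -> \sum_t x t ^+ 2 <= (\sum_t x t) ^+ 2.
Proof.
elim: T x => [|T IH] x Hx; first by rewrite !big_ord0 expr0n.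
rewrite !big_ord_recr /=.
have := IH (fun t => x (widen_ord (leqnSn T) t)) (fun t => Hx _).
have : 0 <= \sum_(i < T) x (widen_ord (leqnSn T) i) by apply: sumr_ge0.
have := Hx ord_max.
move: (\sum_(i < T) x (widen_ord (leqnSn T) i) ^+ 2) => a.
move: (\sum_(i < T) x (widen_ord (leqnSn T) i)) => b.
move: (x ord_max) => c; nra.
Qed.

Lemma diag_bound (R : realType) n m (A0 M Z : 'M[R]_n) (B : 'M[R]_(n, m)) :
  (forall a c, `|A0 a c| <= M a c) -> (forall a c, 0 <= M a c) ->
  (forall a c, 0 <= Z a c) -> (1%:M - M) *m Z = 1%:M ->
  forall T p, \sum_(t < T) (A0 ^+ t *m B *m B^T *m (A0 ^+ t)^T) p p <=
              \sum_r (Z *m absmx B) p r ^+ 2.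
Proof.
move=> HA HM HZ E T p.
under eq_bigr do rewrite diag_sq.
rewrite exchange_big /=; apply: ler_sum => r _.
apply: le_trans (_ : \sum_(t < T) ((M ^+ t) *m absmx B) p r ^+ 2 <= _).
  apply: ler_sum => t _; rewrite -real_normK ?num_real //.
  rewrite ler_sqr ?nnegrE //; last by apply: mul_nonneg => // [|? ?]; [exact: pow_nonneg | rewrite mxE].
  by apply: abs_mul; apply: abs_pow.
apply: le_trans (sum_sq_le _) _.
  by move=> t; apply: mul_nonneg => // [|? ?]; [exact: pow_nonneg | rewrite mxE].
have HS := psum_le HM HZ E T.
rewrite ler_sqr ?nnegrE; last 2 first.
- by apply: sumr_ge0 => t _; apply: mul_nonneg => // [|? ?]; [exact: pow_nonneg | rewrite mxE].
- by apply: mul_nonneg => // ? ?; rewrite mxE.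
rewrite -summxE -mulmx_suml !mxE; apply: ler_sum => k _; apply: ler_wpM2r.
  by rewrite mxE.
by case/andP: (HS p k).
Qed.

Lemma cross (R : realType) n m (Y : 'M[R]_(n, m)) (c : 'I_n -> R) i :
  0 <= c i ->
  2 * \sum_p c p * \sum_r Y p r * Y i r <=
  (c i + Num.sqrt (\sum_p c p ^+ 2)) * \sum_p \sum_r Y p r ^+ 2.
Proof.
move=> ci0.
have r0 : 0 <= Num.sqrt (\sum_p c p ^+ 2) := sqrtr_ge0 _.
have Hr2 : Num.sqrt (\sum_p c p ^+ 2) ^+ 2 = c i ^+ 2 + \sum_(p | p != i) c p ^+ 2.
  rewrite sqr_sqrtr; last by apply: sumr_ge0 => p _; apply: sqr_ge0.
  by rewrite (bigD1 i).
move: r0 Hr2; move: (Num.sqrt (\sum_p c p ^+ 2)) => r0 r0p Hr2.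
have [K0|Kp] := eqVneq (c i + r0) 0.
  have /andP[/eqP ci /eqP rr] : (c i == 0) && (r0 == 0) by rewrite -paddr_eq0 // K0.
  have Q0 : \sum_(p | p != i) c p ^+ 2 = 0 by move: Hr2; rewrite rr ci expr0n /= add0r.
  have cp : forall p, c p = 0.
    move=> p; have [->//|pi] := eqVneq p i.
    by apply/eqP; rewrite -sqrf_eq0; apply/eqP; apply: (psumr_eq0P _ Q0) => // q _; rewrite sqr_ge0.
  rewrite K0 mul0r big1 ?mulr0 // => p _; by rewrite cp mul0r.
have K0 : 0 < c i + r0 by rewrite lt_def Kp addr_ge0.
have [K KE] : exists K, K = c i + r0 by eexists.
rewrite -KE in K0.
have per : forall p, K * (2 * (c p * \sum_r Y p r * Y i r)) <=
    c p ^+ 2 * \sum_r Y i r ^+ 2 + K ^+ 2 * \sum_r Y p r ^+ 2.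
  move=> p.
  have H0 : 0 <= \sum_r (c p * Y i r - K * Y p r) ^+ 2 by apply: sumr_ge0 => r _; apply: sqr_ge0.
  have H1 : \sum_r (c p * Y i r - K * Y p r) ^+ 2 =
      c p ^+ 2 * \sum_r Y i r ^+ 2 - 2 * K * c p * \sum_r Y p r * Y i r
      + K ^+ 2 * \sum_r Y p r ^+ 2.
    by rewrite !mulr_sumr -sumrB -big_split /=; apply: eq_bigr => r _; ring.
  rewrite -subr_ge0 (_ : _ - _ = \sum_r (c p * Y i r - K * Y p r) ^+ 2) //.
  by rewrite H1; ring.
have Hs : K * (2 * \sum_(p | p != i) c p * \sum_r Y p r * Y i r) <=
    (\sum_(p | p != i) c p ^+ 2) * \sum_r Y i r ^+ 2 +
    K ^+ 2 * \sum_(p | p != i) \sum_r Y p r ^+ 2.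
  rewrite [2 * _]mulr_sumr [K * _]mulr_sumr [_ * \sum_r Y i r ^+ 2]mulr_suml.
  rewrite [K ^+ 2 * _]mulr_sumr -big_split /=.
  by apply: ler_sum => p _; apply: per.
rewrite (bigD1 i) //= [X in _ <= _ * X](bigD1 i) //=.
have Ha : \sum_r Y i r * Y i r = \sum_r Y i r ^+ 2 by apply: eq_bigr => r _; rewrite expr2.
rewrite Ha.
have a0 : 0 <= \sum_r Y i r ^+ 2 by apply: sumr_ge0 => r _; apply: sqr_ge0.
move: Hs a0 Hr2 K0 KE ci0 r0p.
move: (\sum_r Y i r ^+ 2) (\sum_(p | p != i) c p ^+ 2) (\sum_(p | p != i) \sum_r Y p r ^+ 2)
  (\sum_(p | p != i) c p * \sum_r Y p r * Y i r) => a Q S D.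
move=> Hs a0 Hr2 K0 KE ci0 r0p.
rewrite KE in Hs K0.
have HQ : Q = r0 ^+ 2 - c i ^+ 2 by rewrite Hr2; ring.
rewrite HQ in Hs.
rewrite -(ler_pM2l K0).
have -> : (c i + r0) * (2 * (c i * a + D)) = 2 * (c i + r0) * c i * a + (c i + r0) * (2 * D) by ring.
have -> : (c i + r0) * ((c i + r0) * (a + S)) = (2 * (c i + r0) * c i * a) + ((r0 ^+ 2 - c i ^+ 2) * a + (c i + r0) ^+ 2 * S) by ring.
by rewrite lerD2l.
Qed.

Lemma le_bigmax_gen (R : realType) (I : eqType) (r : seq I) (P : pred I)
  (F : I -> R) x0 k : k \in r -> P k -> F k <= \big[Num.max/x0]_(i <- r | P i) F i.
Proof.
elim: r => [//|y r IH]; rewrite in_cons big_cons => /orP[/eqP-> ->|kr Pk].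
  by rewrite le_max lexx.
by case: ifP => _; rewrite ?le_max IH ?orbT.
Qed.

Lemma max_offdiag_ge (R : realType) n (i j : 'I_n) (F : 'I_n -> 'I_n -> R) p q :
  p != q -> F p q <= max_offdiag i j F.
Proof.
move=> pq; rewrite /max_offdiag.
apply: le_trans (_ : \big[Num.max/F i j]_(q0 < n | p != q0) F p q0 <= _).
  exact: (le_bigmax_gen (P := fun q0 => p != q0) (fun q0 => F p q0) (F i j) (mem_index_enum q) pq).
exact: (le_bigmax_gen (P := xpredT) (fun p => \big[Num.max/F i j]_(q0 < n | p != q0) F p q0) (F i j) (mem_index_enum p)).
Qed.

Lemma max_all_ge (R : realType) n (i : 'I_n) (F : 'I_n -> R) k : F k <= max_all i F.
Proof. exact: (le_bigmax_gen (P := xpredT) F (F i) (mem_index_enum k)). Qed.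

Lemma mul_delta_r (R : realType) n (P : 'M[R]_n) (j i p q : 'I_n) :
  (P *m delta_mx j i) p q = P p j * (q == i)%:R.
Proof.
rewrite mxE (bigD1 j) //= mxE eqxx /= big1 ?addr0 // => k kj.
by rewrite mxE (negbTE kj) mulr0.
Qed.

Lemma mul_delta_l (R : realType) n (Q : 'M[R]_n) (j i p q : 'I_n) :
  (delta_mx j i *m Q) p q = (p == j)%:R * Q i q.
Proof.
rewrite mxE (bigD1 i) //= mxE eqxx andbT big1 ?addr0 // => k ki.
by rewrite mxE (negbTE ki) andbF mul0r.
Qed.

Lemma mul_delta_mid (R : realType) n k (P : 'M[R]_n) (Q : 'M[R]_(n, k)) (j i p : 'I_n) (q : 'I_k) :
  (P *m delta_mx j i *m Q) p q = P p j * Q i q.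
Proof.
rewrite mxE (bigD1 i) //= mul_delta_r eqxx mulr1 big1 ?addr0 // => l li.
by rewrite mul_delta_r (negbTE li) mulr0 mul0r.
Qed.

Lemma gram_parts (R : realType) n m T (A : 'M[R]_n) (B : 'M[R]_(n, m)) (X : 'M[R]_n) :
  (forall a c, 0 <= X a c) -> (1%:M - absmx A) *m X = 1%:M ->
  \tr (gram T A B) <= \tr (gram_inf A B) /\
  \tr (gram_inf A B) <= \tr (X *m absmx B *m (absmx B)^T *m X^T).
Proof.
move=> HX EX.
have HN : forall a c, 0 <= absmx A a c by move=> a c; rewrite /absmx mxE.
have HA : forall a c, `|A a c| <= absmx A a c by move=> a c; rewrite /absmx mxE.
have DB := diag_bound B HA HN HX EX.
pose u (p : 'I_n) (k : nat) := \sum_(0 <= t < k) (A ^+ t *m B *m B^T *m (A ^+ t)^T) p p.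
have ub : forall p k, u p k <= (X *m absmx B *m (absmx B)^T *m X^T) p p.
  by move=> p k; rewrite diag_sq /u big_mkord; apply: DB.
have inc : forall p, {homo u p : a b / (a <= b)%N >-> a <= b}.
  move=> p; apply/nondecreasing_seqP => k.
  by rewrite /u big_nat_recr //= lerDl diag_sq sumr_ge0 // => r _; rewrite sqr_ge0.
have cv : forall p, cvgn (u p).
  move=> p; apply/cvg_ex; exists (sup (range (u p))).
  apply: nondecreasing_cvgn => //.
  by exists ((X *m absmx B *m (absmx B)^T *m X^T) p p) => _ [k _ <-].
split; rewrite /mxtrace; apply: ler_sum => p _.
  rewrite /gram_inf mxE /gram summxE.
  have := nondecreasing_cvgn_le (inc p) (cv p) T.
  by rewrite /u big_mkord.
rewrite /gram_inf mxE; apply: limr_le; first exact: cv.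
by apply: nearW => k; apply: ub.
Qed.

End Helpers.
Import Helpers.
Unset Implicit Arguments. Set Strict Implicit. Set Printing Implicit Defensive.

Theorem theorem5p1 (R : realType) (n m T : nat)
  (A : 'M[R]_n) (B : 'M[R]_(n, m)) (i j : 'I_n) (w : R) :
  specrad (absmx A) < 1 ->
  (0 < T)%N ->
  i != j ->
  specrad (absmx A + `|w| *: delta_mx j i) < 1 ->
  let X := invmx (1%:M - absmx A) in
  let H := X *m absmx B *m (absmx B)^T *m X^T in
  let alpha := max_offdiag i j (fun p q => `|w| / (1 - `|w| * X p q)) in
  let beta := Num.max
      (max_offdiag i j (fun p q => 2 * X p q))
      (max_offdiag i j (fun p q => X p q)
         + max_all i (fun q => Num.sqrt (\sum_(k < n) X k q ^+ 2))) in
  let gamma := max_all i (fun k => (X^T *m X) k k) in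
  let gammabar := max_all i (fun k => H k k) in
  [/\ \tr (gram T A B) <= \tr (gram_inf A B),
      \tr (gram_inf A B) <= \tr H
    & \tr (gram T (A + w *: delta_mx j i) B)
        <= (1 + alpha * beta) * \tr H + alpha ^+ 2 * gamma * gammabar].
Proof.
move=> HrA _ ij HrM X H alpha beta gamma gammabar.
have HN : forall a c, 0 <= absmx A a c by move=> a c; rewrite /absmx mxE.
have [UX HX] := inv_nonneg HN HrA.
have EX : (1%:M - absmx A) *m X = 1%:M by apply: mulmxV.
have EX' : X *m (1%:M - absmx A) = 1%:M by apply: mulVmx.
have [P1 P2] := gram_parts T B HX EX.
split => //.
set D := delta_mx j i.
set M := absmx A + `|w| *: D.
have HD : forall a c, 0 <= D a c by move=> a c; rewrite /D mxE ler0n.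
have HM : forall a c, 0 <= M a c.
  by move=> a c; rewrite /M mxE; apply: addr_ge0 => //; rewrite mxE mulr_ge0.
have HAM : forall a c, `|(A + w *: D) a c| <= M a c.
  move=> a c; rewrite /M !mxE; apply: le_trans (ler_normD _ _) _.
  by rewrite lerD2l normrM normr_nat.
have [UX' HX'] := inv_nonneg HM HrM.
have EM : (1%:M - M) *m invmx (1%:M - M) = 1%:M by apply: mulmxV.
move: (invmx (1%:M - M)) HX' EM => X' HX' EM.
have key : X' i j * (1 - `|w| * X i j) = X i j.
  have E1 : X' = X + `|w| *: (X *m D *m X').
    have : (1%:M - absmx A) *m X' = 1%:M + `|w| *: (D *m X').
      have -> : (1%:M - absmx A) *m X' = (1%:M - M) *m X' + (`|w| *: D) *m X'.
        by rewrite /M opprD addrA [in RHS]mulmxBl subrK.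
      by rewrite EM -scalemxAl.
    move=> E; rewrite -[LHS]mul1mx -EX' -mulmxA E mulmxDr mulmx1 -scalemxAr mulmxA.
    done.
  move/matrixP: E1 => /(_ i j); rewrite [in RHS]mxE [in RHS]mxE mul_delta_mid => E.
  by rewrite mulrBr mulr1 {1}E; ring.
have Xij0 : 0 <= X i j := HX i j.
have d0 : 0 < 1 - `|w| * X i j.
  rewrite ltNge; apply/negP => dle.
  have : X i j <= 0 by rewrite -key mulr_ge0_le0.
  move=> Xle; have X0 : X i j = 0 by apply/le_anti; rewrite Xle Xij0.
  by move: dle; rewrite X0 mulr0 subr0 ler10.
set a := `|w| / (1 - `|w| * X i j).
have a0 : 0 <= a by rewrite /a divr_ge0 // ltW.
have ad : a * (1 - `|w| * X i j) = `|w| by rewrite /a divfK // gt_eqF.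
set Z := X + a *: (X *m D *m X).
have HZ : forall p q, 0 <= Z p q.
  move=> p q; rewrite /Z mxE; apply: addr_ge0; first exact: HX.
  rewrite mxE; apply: mulr_ge0 => //.
  by rewrite /D mul_delta_mid; apply: mulr_ge0.
have EZ : (1%:M - M) *m Z = 1%:M.
  have E1 : (1%:M - absmx A) *m Z = 1%:M + a *: (D *m X).
    by rewrite /Z mulmxDr EX -scalemxAr !mulmxA EX mul1mx.
  have E2 : (`|w| *: D) *m Z = (`|w| + `|w| * a * X i j) *: (D *m X).
    rewrite -scalemxAl; apply/matrixP => p q.
    rewrite [LHS]mxE mul_delta_l [RHS]mxE mul_delta_l /Z mxE mxE mul_delta_mid.
    ring.
  rewrite /M opprD addrA mulmxBl E1 E2 -addrA -scalerBl.
  have -> : a - (`|w| + `|w| * a * X i j) = 0.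
    have -> : a - (`|w| + `|w| * a * X i j) = a * (1 - `|w| * X i j) - `|w| by ring.
    by rewrite ad subrr.
  by rewrite scale0r addr0.
have DB := diag_bound B HAM HM HZ EZ T.
have S1 : \tr (gram T (A + w *: D) B) <= \sum_p \sum_r (Z *m absmx B) p r ^+ 2.
  by rewrite /mxtrace; apply: ler_sum => p _; rewrite /gram summxE; apply: DB.
have ZB : forall p r, (Z *m absmx B) p r =
    (X *m absmx B) p r + a * (X p j * (X *m absmx B) i r).
  move=> p r; rewrite /Z mulmxDl -scalemxAl [LHS]mxE; congr (_ + _).
  by rewrite mxE -mulmxA /D mul_delta_mid.
have trH : \tr H = \sum_p \sum_r (X *m absmx B) p r ^+ 2.
  by rewrite /mxtrace; apply: eq_bigr => p _; rewrite /H diag_sq.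
have Hii : H i i = \sum_r (X *m absmx B) i r ^+ 2 by rewrite /H diag_sq.
have gj : (X^T *m X) j j = \sum_k X k j ^+ 2.
  by rewrite mxE; apply: eq_bigr => k _; rewrite mxE expr2.
have S2 : \sum_p \sum_r (Z *m absmx B) p r ^+ 2 =
    \sum_p \sum_r ((X *m absmx B) p r + a * (X p j * (X *m absmx B) i r)) ^+ 2.
  by apply: eq_bigr => p _; apply: eq_bigr => r _; rewrite ZB.
have Eexp : \sum_p \sum_r ((X *m absmx B) p r + a * (X p j * (X *m absmx B) i r)) ^+ 2
   = \sum_p \sum_r (X *m absmx B) p r ^+ 2
     + a * (2 * \sum_p X p j * \sum_r (X *m absmx B) p r * (X *m absmx B) i r)
     + a ^+ 2 * ((\sum_p X p j ^+ 2) * \sum_r (X *m absmx B) i r ^+ 2).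
  rewrite [2 * _]mulr_sumr [a * _]mulr_sumr [_ * \sum_r _]mulr_suml.
  rewrite [a ^+ 2 * _]mulr_sumr -!big_split /=; apply: eq_bigr => p _.
  rewrite !mulr_sumr -!big_split /=; apply: eq_bigr => r _; ring.
have Hcross := cross (X *m absmx B) (c := fun p => X p j) Xij0.
have Hal : a <= alpha.
  exact: (@max_offdiag_ge R n i j (fun p q => `|w| / (1 - `|w| * X p q)) i j ij).
have Hbe : X i j + Num.sqrt (\sum_k X k j ^+ 2) <= beta.
  rewrite /beta le_max; apply/orP; right; apply: lerD.
    exact: (@max_offdiag_ge R n i j (fun p q => X p q) i j ij).
  exact: (@max_all_ge R n i (fun q => Num.sqrt (\sum_(k < n) X k q ^+ 2)) j).
have Hga : \sum_k X k j ^+ 2 <= gamma.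
  by rewrite -gj; exact: (@max_all_ge R n i (fun k => (X^T *m X) k k) j).
have Hgb : \sum_r (X *m absmx B) i r ^+ 2 <= gammabar.
  by rewrite -Hii; exact: (@max_all_ge R n i (fun k => H k k) i).
have h0 : 0 <= \sum_p \sum_r (X *m absmx B) p r ^+ 2.
  by apply: sumr_ge0 => p _; apply: sumr_ge0 => r _; apply: sqr_ge0.
have g10 : 0 <= \sum_k X k j ^+ 2 by apply: sumr_ge0 => k _; apply: sqr_ge0.
have g20 : 0 <= \sum_r (X *m absmx B) i r ^+ 2 by apply: sumr_ge0 => k _; apply: sqr_ge0.
have s0 : 0 <= X i j + Num.sqrt (\sum_k X k j ^+ 2) by rewrite addr_ge0 ?sqrtr_ge0.
apply: le_trans S1 _; rewrite S2 Eexp trH.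
move: Hcross Hal Hbe Hga Hgb h0 g10 g20 s0 a0.
move: (\sum_p \sum_r (X *m absmx B) p r ^+ 2) => h.
move: (2 * \sum_p X p j * \sum_r (X *m absmx B) p r * (X *m absmx B) i r) => cr.
move: (X i j + Num.sqrt (\sum_k X k j ^+ 2)) => cs.
move: (\sum_k X k j ^+ 2) (\sum_r (X *m absmx B) i r ^+ 2) => g1 g2.
move=> Hcr Hal Hbe Hga Hgb h0 g10 g20 s0 a0.
have st1 : a * cr <= alpha * beta * h.
  apply: le_trans (ler_wpM2l a0 Hcr) _; rewrite -mulrA.
  apply: ler_pM => //; first by rewrite mulr_ge0.
  exact: ler_wpM2r.
have st2 : a ^+ 2 * (g1 * g2) <= alpha ^+ 2 * gamma * gammabar.
  rewrite -mulrA; apply: ler_pM.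
  - exact: exprn_ge0.
  - exact: mulr_ge0.
  - by rewrite !expr2; apply: ler_pM.
  - by apply: ler_pM.
rewrite mulrDl mul1r -!addrA lerD2l; exact: lerD st1 st2.
Qed.
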